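(* Let $\mathbb{F}$ be a field and let $q\in\mathbb{F}$ be a root of unity with $q\neq 1$; let $p\geq 2$ be the least positive integer with $q^p=1$. Let $\mathcal{H}$ be the unital associative $\mathbb{F}$-algebra generated by $A,B$ subject to $AB-qBA=I$, with $[f,g]=fg-gf$ and $\Lambda:=AB-BA$. Call an element of $\mathcal{H}$ a ''special basis element'' if it is of the form $B^m\Lambda^n$ or $\Lambda^nA^m$ with $m,n$ positive integers both congruent to $0$ modulo $p$. Then for every $m,k\in\mathbb{N}$ and every $n,l\in\mathbb{Z}^+$, each of the commutators $$[\Lambda^m,\Lambda^kA^l],\quad [\Lambda^m,B^l\Lambda^k],\quad [\Lambda^mA^n,\Lambda^kA^l],\quad [\Lambda^mA^n,B^l\Lambda^k]\ \ (n\neq l),\quad [B^n\Lambda^m,B^l\Lambda^k],$$ when expanded as a linear combination of the basis $\{\Lambda^k,\ \Lambda^kA^l,\ B^l\Lambda^k : k\in\mathbb{N},\ l\in\mathbb{Z}^+\}$ of $\mathcal{H}$, has coefficient zero at every special basis element.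
   Context: $\mathbb{N}$ denotes the nonnegative integers, $\mathbb{Z}^+$ the positive integers, $f^0=I$. The elements $\Lambda^k$, $\Lambda^kA^l$, $B^l\Lambda^k$ ($k\in\mathbb{N}$, $l\in\mathbb{Z}^+$) form a basis of $\mathcal{H}$. *)

(* Defs.v *)
From HB Require Import structures.
From mathcomp Require Import all_boot all_order all_algebra.
Set Implicit Arguments. Unset Strict Implicit. Unset Printing Implicit Defensive.
Import Order.TTheory GRing.Theory Num.Theory.
Local Open Scope ring_scope.

Definition comm (R : ringType) (f g : R) : R := f * g - g * f.

(* Index set of the standard basis of H:
     inl (inl k)      ~  Lambda^k                     (k in N)
     inl (inr (k,l))  ~  Lambda^k A^(l+1)             (k in N, l+1 in Z^+)
     inr (l,k)        ~  B^(l+1) Lambda^k             (l+1 in Z^+, k in N) *)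
Definition hidx := ((nat + (nat * nat)) + (nat * nat))%type.

Definition special_idx (p : nat) (i : hidx) : bool :=
  match i with
  | inl (inl _) => false
  | inl (inr (n, m')) => (0 < n)%N && (p %| n)%N && (p %| m'.+1)%N
  | inr (m', n) => (0 < n)%N && (p %| n)%N && (p %| m'.+1)%N
  end.

Section Basis.
Variables (F : fieldType) (H : algType F) (A B : H).

Definition Lam : H := A * B - B * A.

Definition hbas (i : hidx) : H :=
  match i with
  | inl (inl k) => Lam ^+ k
  | inl (inr (k, l)) => Lam ^+ k * A ^+ l.+1
  | inr (l, k) => B ^+ l.+1 * Lam ^+ k
  end.

Definition expansion (s : seq hidx) (c : hidx -> F) (x : H) : Prop :=
  uniq s /\ x = \sum_(i <- s) c i *: hbas i.

Definition is_std_basis : Prop :=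
  (forall (s : seq hidx) (c : hidx -> F),
      uniq s -> \sum_(i <- s) c i *: hbas i = 0 -> forall i, i \in s -> c i = 0)
  /\ (forall x : H, exists s c, expansion s c x).

Definition zero_at_special (p : nat) (x : H) : Prop :=
  forall s c, expansion s c x -> forall i, i \in s -> special_idx p i -> c i = 0.
End Basis.

(* Main.v *)
Require Import Defs.
From HB Require Import structures.
From mathcomp Require Import all_boot all_order all_algebra.
From mathcomp Require Import zify ring.
Import GRing.Theory.
Local Open Scope ring_scope.

Section S.
Variables (F : fieldType) (q : F) (p : nat) (H : algType F) (A B : H).
Hypothesis hrel : A * B - q *: (B * A) = 1.

Local Notation L := (Lam A B).
Definition ev (P : {poly F}) : H := horner_alg L P.
Definition tw (c : F) (P : {poly F}) : {poly F} := \poly_(i < size P) (c ^+ i * P`_i).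

Lemma coef_tw c P i : (tw c P)`_i = c ^+ i * P`_i.
Proof.
rewrite /tw coef_poly; case: ltnP => // hi.
by rewrite nth_default // mulr0.
Qed.

Lemma evE P : ev P = \sum_(i < size P) P`_i *: L ^+ i.
Proof.
rewrite /ev -{1}(coefK P) poly_def rmorph_sum; apply: eq_bigr => i _.
by rewrite -mul_polyC rmorphM /= horner_algC rmorphXn /= horner_algX mulr_algl.
Qed.

Lemma evM P Q : ev (P * Q) = ev P * ev Q.
Proof. by rewrite /ev rmorphM. Qed.
Lemma evB P Q : ev (P - Q) = ev P - ev Q.
Proof. by rewrite /ev rmorphB. Qed.
Lemma evD P Q : ev (P + Q) = ev P + ev Q.
Proof. by rewrite /ev rmorphD. Qed.
Lemma evZ c P : ev (c *: P) = c *: ev P.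
Proof. by rewrite -mul_polyC evM /ev horner_algC mulr_algl. Qed.
Lemma evXn k : ev ('X^k) = L ^+ k.
Proof. by rewrite /ev rmorphXn /= horner_algX. Qed.
Lemma ev1 : ev 1 = 1.
Proof. by rewrite /ev rmorph1. Qed.

Lemma tw_MXaddC c P b : tw c (P * 'X + b%:P) = tw c P * (c *: 'X) + b%:P.
Proof.
apply/polyP => i; rewrite -scalerAr !(coefD, coefMX, coefC, coef_tw, coefZ).
case: i => [|i] /=; first by rewrite !mulr0 !add0r expr0 mul1r.
by rewrite !addr0 exprS mulrA.
Qed.

Lemma push (a : H) (c : F) : a * L = c *: (L * a) ->
  forall P, a * ev P = ev (tw c P) * a.
Proof.
move=> haL P; elim/poly_ind: P => [|P b IH].
  have -> : tw c 0 = 0 by apply/polyP=> i; rewrite coef_tw coef0 mulr0.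
  by rewrite /ev rmorph0 mulr0 mul0r.
rewrite tw_MXaddC /ev !rmorphD !rmorphM /= !horner_algC !horner_algX.
rewrite -/(ev P) -/(ev (tw c P)) mulrDr mulrDl mulrA IH -mulrA haL.
rewrite -scalerAl -scalerAr mulrA -/(ev (c *: 'X)) evZ -(expr1 'X) evXn expr1.
by rewrite mulr_algr mul1r -scalerAr -scalerAl.
Qed.

Lemma push_r (a : H) (c : F) : L * a = c *: (a * L) ->
  forall P, ev P * a = a * ev (tw c P).
Proof.
move=> haL P; elim/poly_ind: P => [|P b IH].
  have -> : tw c 0 = 0 by apply/polyP=> i; rewrite coef_tw coef0 mulr0.
  by rewrite /ev rmorph0 mulr0 mul0r.
rewrite tw_MXaddC /ev !rmorphD !rmorphM /= !horner_algC !horner_algX.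
rewrite -/(ev P) -/(ev (tw c P)) [in RHS]mulrDr [in LHS]mulrDl -[in LHS]mulrA haL -scalerAr mulrA IH.
rewrite -/(ev (c *: 'X)) evZ -(expr1 'X) evXn expr1.
by rewrite mulr_algr mulr_algl -!scalerAr mulrA.
Qed.

Lemma tw_tw c d P : tw c (tw d P) = tw (c * d) P.
Proof. by apply/polyP=> i; rewrite !coef_tw mulrA exprMn. Qed.
Lemma tw1 P : tw 1 P = P.
Proof. by apply/polyP=> i; rewrite !coef_tw expr1n mul1r. Qed.
Lemma tw_Xn c k : tw c 'X^k = c ^+ k *: 'X^k.
Proof.
apply/polyP=> i; rewrite coef_tw coefZ coefXn.
by case: eqP => [->|]; rewrite ?mulr0.
Qed.

Lemma pushn (a : H) (c : F) : a * L = c *: (L * a) ->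
  forall n P, a ^+ n * ev P = ev (tw (c ^+ n) P) * a ^+ n.
Proof.
move=> haL; elim=> [|n IH] P; first by rewrite !expr0 mul1r mulr1 tw1.
by rewrite exprS -mulrA IH mulrA (push _ _ haL) tw_tw -mulrA -exprS -exprS.
Qed.

Lemma pushn_r (a : H) (c : F) : L * a = c *: (a * L) ->
  forall n P, ev P * a ^+ n = a ^+ n * ev (tw (c ^+ n) P).
Proof.
move=> haL; elim=> [|n IH] P; first by rewrite !expr0 mul1r mulr1 tw1.
by rewrite exprSr mulrA IH -mulrA (push_r _ _ haL) tw_tw mulrA -exprSr -exprS.
Qed.

Lemma hAB : A * B = 1 + q *: (B * A).
Proof. by rewrite -hrel subrK. Qed.

Lemma hAL : A * L = q *: (L * A).
Proof.
rewrite /Lam mulrBr mulrBl hAB mulrDr mulr1 -scalerAr.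
rewrite !(mulrA A B A) hAB !mulrDl !mul1r -!scalerAl.
by rewrite [A + q *: _]addrC addrKA scalerBr.
Qed.

Lemma hLB : L * B = q *: (B * L).
Proof.
rewrite /Lam mulrBr mulrBl hAB -!(mulrA B A B) hAB.
rewrite mulrDl mul1r -scalerAl -(mulrA B A B) hAB.
rewrite !(mulrDr B 1) mulr1 -!scalerAr.
by rewrite [B + q *: _]addrC addrKA scalerBr.
Qed.

Definition dec (j : hidx) : nat :=
  match j with inl (inl i) => i | inl (inr (i, _)) => i | inr (_, i) => i end.

Lemma sum_idx (idx : nat -> hidx) (hdec : forall i, dec (idx i) = i) (R : {poly F}) :
  \sum_(j <- map idx (index_iota 0 (size R))) R`_(dec j) *: hbas A B j
  = \sum_(i < size R) R`_i *: hbas A B (idx i).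
Proof. by rewrite big_map big_mkord; apply: eq_bigr => i _; rewrite hdec. Qed.

Lemma uniq_idx (idx : nat -> hidx) (hdec : forall i, dec (idx i) = i) N :
  uniq (map idx (index_iota 0 N)).
Proof.
rewrite map_inj_uniq ?iota_uniq //.
by move=> i j e; rewrite -(hdec i) -(hdec j) e.
Qed.

Lemma evA R d : ev R * A ^+ d.+1 = \sum_(i < size R) R`_i *: hbas A B (inl (inr (nat_of_ord i, d))).
Proof. by rewrite evE mulr_suml; apply: eq_bigr => i _; rewrite -scalerAl. Qed.

Lemma evBl R d : B ^+ d.+1 * ev R = \sum_(i < size R) R`_i *: hbas A B (inr (d, nat_of_ord i)).
Proof. by rewrite evE mulr_sumr; apply: eq_bigr => i _; rewrite -scalerAr. Qed.

Hypothesis hind : forall (s : seq hidx) (c : hidx -> F),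
      uniq s -> \sum_(i <- s) c i *: hbas A B i = 0 -> forall i, i \in s -> c i = 0.

Lemma cancelA d P P' : ev P * A ^+ d.+1 = ev P' * A ^+ d.+1 -> P = P'.
Proof.
move=> e; apply/eqP; rewrite -subr_eq0; apply/eqP.
set R := P - P'.
have h0 : ev R * A ^+ d.+1 = 0 by rewrite evB mulrBl e subrr.
have hdec : forall i, dec (inl (inr (i, d))) = i by [].
move: h0; rewrite evA -(sum_idx _ hdec) => h0.
have := hind _ _ (uniq_idx _ hdec (size R)) h0.
move=> hc; apply/polyP => i; rewrite coef0.
case: (ltnP i (size R)) => hi; last by rewrite nth_default.
have := hc (inl (inr (i, d))); rewrite /= => -> //.
by apply/mapP; exists i => //; rewrite mem_index_iota.
Qed.

Lemma sumsub (s u : seq hidx) (f : hidx -> H) : uniq s -> uniq u -> {subset s <= u} ->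
  \sum_(j <- u) (if j \in s then f j else 0) = \sum_(j <- s) f j.
Proof.
move=> us uu sub; rewrite -big_mkcond -big_filter; apply: perm_big.
apply: uniq_perm; rewrite ?filter_uniq // => j.
rewrite mem_filter; case: (boolP (j \in s)) => //= js.
by rewrite (sub _ js).
Qed.

Lemma key (t : seq hidx) (d : hidx -> F) (x : H) : uniq t ->
  x = \sum_(j <- t) d j *: hbas A B j ->
  (forall j, j \in t -> special_idx p j -> d j = 0) -> zero_at_special A B p x.
Proof.
move=> ut ex hsp s c [us exs] i iS spi.
set u := undup (s ++ t).
pose e j := (if j \in s then c j else 0) - (if j \in t then d j else 0).
have uu : uniq u by apply: undup_uniq.
have su : {subset s <= u} by move=> j js; rewrite mem_undup mem_cat js.
have tu : {subset t <= u} by move=> j js; rewrite mem_undup mem_cat js orbT.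
have h0 : \sum_(j <- u) e j *: hbas A B j = 0.
  rewrite /e.
  under eq_bigr => j _ do rewrite scalerBl.
  rewrite sumrB.
  have -> : \sum_(j <- u) (if j \in s then c j else 0) *: hbas A B j =
            \sum_(j <- u) (if j \in s then c j *: hbas A B j else 0).
    by apply: eq_bigr => j _; case: (j \in s); rewrite ?scale0r.
  have -> : \sum_(j <- u) (if j \in t then d j else 0) *: hbas A B j =
            \sum_(j <- u) (if j \in t then d j *: hbas A B j else 0).
    by apply: eq_bigr => j _; case: (j \in t); rewrite ?scale0r.
  by rewrite !sumsub // -exs -ex subrr.
have := hind _ _ uu h0 _ (su _ iS); rewrite /e iS.
case: (boolP (i \in t)) => it; last by rewrite subr0.
by rewrite (hsp _ it spi) subr0.
Qed.

Hypothesis hp : (0 < p)%N.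
Hypothesis hqp : q ^+ p = 1.

Lemma qdiv n : (p %| n)%N -> q ^+ n = 1.
Proof. by move=> h; rewrite -(divnK h) mulnC exprM hqp expr1n. Qed.

Lemma q0 : q != 0.
Proof. by apply/eqP=> e; move: hqp; rewrite e expr0n eqn0Ngt hp /= => /eqP; rewrite eq_sym oner_eq0. Qed.

Lemma same (x y z : F) : x * z = 1 -> y * z = 1 -> x = y.
Proof. by move=> h1 h2; rewrite -[x]mulr1 -h2 mulrA (mulrC x) -mulrA h1 mulr1. Qed.

Lemma zA (R : {poly F}) e : (0 < e)%N ->
  (forall i, (0 < i)%N -> (p %| i)%N -> (p %| e)%N -> R`_i = 0) ->
  zero_at_special A B p (ev R * A ^+ e).
Proof.
case: e => // d _ hR.
have hdec : forall i, dec (inl (inr (i, d))) = i by [].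
apply: (key _ (fun j => R`_(dec j)) _ (uniq_idx _ hdec (size R))); first by rewrite evA sum_idx.
move=> j /mapP [i _ ->] /=; rewrite andbC => /andP [hd /andP [hi hpi]].
exact: hR.
Qed.

Lemma zB (R : {poly F}) e : (0 < e)%N ->
  (forall i, (0 < i)%N -> (p %| i)%N -> (p %| e)%N -> R`_i = 0) ->
  zero_at_special A B p (B ^+ e * ev R).
Proof.
case: e => // d _ hR.
have hdec : forall i, dec (inr (d, i)) = i by [].
apply: (key _ (fun j => R`_(dec j)) _ (uniq_idx _ hdec (size R))); first by rewrite evBl sum_idx.
move=> j /mapP [i _ ->] /=; rewrite andbC => /andP [hd /andP [hi hpi]].
exact: hR.
Qed.

Lemma zscale (c : F) x : c != 0 -> zero_at_special A B p (c *: x) -> zero_at_special A B p x.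
Proof.
move=> c0 h s cc [us ex] i iS sp.
have : c * cc i = 0.
  apply: (h s (fun j => c * cc j)) => //; split => //.
  by rewrite ex scaler_sumr; apply: eq_bigr => j _; rewrite scalerA.
by move/eqP; rewrite mulf_eq0 (negPf c0) /= => /eqP.
Qed.

Lemma cAL n k : A ^+ n * L ^+ k = q ^+ (n * k) *: (L ^+ k * A ^+ n).
Proof. by rewrite -evXn (pushn _ _ hAL) tw_Xn evZ evXn -scalerAl exprM. Qed.

Lemma cLB n k : L ^+ k * B ^+ n = q ^+ (n * k) *: (B ^+ n * L ^+ k).
Proof. by rewrite -evXn (pushn_r _ _ hLB) tw_Xn evZ evXn -scalerAr exprM. Qed.


Lemma case1 m k l : (0 < l)%N -> zero_at_special A B p (comm (L ^+ m) (L ^+ k * A ^+ l)).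
Proof.
move=> hl.
have -> : comm (L ^+ m) (L ^+ k * A ^+ l) = ev ((1 - q ^+ (l * m)) *: 'X^(m + k)) * A ^+ l.
  rewrite /comm evZ evXn -scalerAl scalerBl scale1r mulrA -exprD -mulrA cAL -scalerAr.
  by rewrite mulrA -exprD (addnC k m).
apply: zA => // i _ _ hl'.
by rewrite coefZ (qdiv _ (dvdn_mulr _ hl')) subrr mul0r.
Qed.

Lemma case2 m k l : (0 < l)%N -> zero_at_special A B p (comm (L ^+ m) (B ^+ l * L ^+ k)).
Proof.
move=> hl.
have -> : comm (L ^+ m) (B ^+ l * L ^+ k) = B ^+ l * ev ((q ^+ (l * m) - 1) *: 'X^(m + k)).
  rewrite /comm evZ evXn -scalerAr scalerBl scale1r mulrA cLB -scalerAl -!mulrA -!exprD.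
  by rewrite (addnC k m).
apply: zB => // i _ _ hl'.
by rewrite coefZ (qdiv _ (dvdn_mulr _ hl')) subrr mul0r.
Qed.

Lemma case3 m k n l : (0 < n)%N -> zero_at_special A B p (comm (L ^+ m * A ^+ n) (L ^+ k * A ^+ l)).
Proof.
move=> hn.
have -> : comm (L ^+ m * A ^+ n) (L ^+ k * A ^+ l) =
   ev ((q ^+ (n * k) - q ^+ (l * m)) *: 'X^(m + k)) * A ^+ (n + l).
  rewrite /comm evZ evXn -scalerAl scalerBl !mulrA -(mulrA _ (A ^+ n)) cAL -(mulrA _ (A ^+ l)) cAL.
  rewrite -!scalerAr -!scalerAl !mulrA -!exprD (addnC k m) -!mulrA -!exprD (addnC l n).
  by [].
apply: zA; first by rewrite addn_gt0 hn.
move=> i _ hi hnl; rewrite coefZ coefXn.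
case: eqP => [ei|]; last by rewrite mulr0.
rewrite ei in hi.
rewrite (@same (q ^+ (n * k)) (q ^+ (l * m)) (q ^+ (n * m))) ?subrr ?mul0r //.
  by rewrite -exprD -mulnDr qdiv // dvdn_mull // addnC.
by rewrite -exprD -mulnDl qdiv // dvdn_mulr // addnC.
Qed.

Lemma case5 m k n l : (0 < n)%N -> zero_at_special A B p (comm (B ^+ n * L ^+ m) (B ^+ l * L ^+ k)).
Proof.
move=> hn.
have -> : comm (B ^+ n * L ^+ m) (B ^+ l * L ^+ k) =
   B ^+ (n + l) * ev ((q ^+ (l * m) - q ^+ (n * k)) *: 'X^(m + k)).
  rewrite /comm evZ evXn -scalerAr scalerBl !mulrA -(mulrA _ (L ^+ m)) cLB -(mulrA _ (L ^+ k)) cLB.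
  rewrite -!scalerAr -!scalerAl !mulrA -!exprD -!mulrA -!exprD (addnC k m) (addnC l n).
  by [].
apply: zB; first by rewrite addn_gt0 hn.
move=> i _ hi hnl; rewrite coefZ coefXn.
case: eqP => [ei|]; last by rewrite mulr0.
rewrite ei in hi.
rewrite (@same (q ^+ (l * m)) (q ^+ (n * k)) (q ^+ (l * k))) ?subrr ?mul0r //.
  by rewrite -exprD -mulnDr qdiv // dvdn_mull.
by rewrite -exprD -mulnDl qdiv // dvdn_mulr.
Qed.


Hypothesis hq1 : q != 1.

Lemma hLA : L * A = q^-1 *: (A * L).
Proof. by rewrite hAL scalerA mulVf ?q0 // scale1r. Qed.

Lemma BApoly : B * A = ev ((q - 1)^-1 *: ('X - 1)).
Proof.
have e : L - 1 = (q - 1) *: (B * A).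
  by rewrite /Lam hAB scalerBl scale1r addrAC [1 + _]addrC addrK.
rewrite evZ evB -(expr1 'X) evXn ev1 expr1 e scalerA mulVf ?scale1r //.
by rewrite subr_eq0.
Qed.

Lemma ABpoly : A * B = ev (1 + q *: ((q - 1)^-1 *: ('X - 1))).
Proof. by rewrite hAB evD ev1 evZ -BApoly. Qed.

Lemma Pex l : exists P, A ^+ l * B ^+ l = ev P.
Proof.
elim: l => [|l [P hP]]; first by exists 1; rewrite !expr0 mulr1 ev1.
exists (tw q P * (1 + q *: ((q - 1)^-1 *: ('X - 1)))).
by rewrite exprS exprSr mulrA -(mulrA A) hP (push _ _ hAL) -mulrA ABpoly evM.
Qed.

Lemma Qex l : exists Q, B ^+ l * A ^+ l = ev Q.
Proof.
elim: l => [|l [Q hQ]]; first by exists 1; rewrite !expr0 mulr1 ev1.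
exists ((q - 1)^-1 *: ('X - 1) * tw q^-1 Q).
by rewrite exprS exprSr mulrA -(mulrA B) hQ -mulrA (push_r _ _ hLA) mulrA BApoly evM.
Qed.

Lemma PQ l : exists Q, A ^+ l * B ^+ l = ev (tw (q ^+ l) Q) /\ B ^+ l * A ^+ l = ev Q.
Proof.
have [P hP] := Pex l; have [Q hQ] := Qex l.
exists Q; split => //.
case: l hP hQ => [|l] hP hQ; first by rewrite expr0 tw1 -hQ !expr0.
rewrite hP; congr ev; apply: (cancelA l).
by rewrite -hP -mulrA hQ (pushn _ _ hAL).
Qed.

Lemma case4a m k l e : (0 < e)%N ->
  zero_at_special A B p (comm (L ^+ m * A ^+ (e + l)) (B ^+ l * L ^+ k)).
Proof.
move=> he; have [Q [hP hQ]] := PQ l.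
apply: (zscale (q ^+ (l * (k + m)))); first by rewrite expf_neq0 // q0.
have h1 : L ^+ m * A ^+ (e + l) * (B ^+ l * L ^+ k) =
   q ^+ (e * k) *: (ev ('X^m * tw (q ^+ e) (tw (q ^+ l) Q) * 'X^k) * A ^+ e).
  rewrite exprD.
  have -> : L ^+ m * (A ^+ e * A ^+ l) * (B ^+ l * L ^+ k) =
            L ^+ m * (A ^+ e * (A ^+ l * B ^+ l)) * L ^+ k by rewrite !mulrA.
  rewrite hP (pushn _ _ hAL) -!mulrA cAL !evM !evXn -!scalerAr !mulrA.
  by [].
have h2 : q ^+ (l * (k + m)) *: (B ^+ l * L ^+ k * (L ^+ m * A ^+ (e + l))) =
   ev ('X^(k + m) * Q) * A ^+ e.
  rewrite (addnC e l) exprD.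
  have -> : B ^+ l * L ^+ k * (L ^+ m * (A ^+ l * A ^+ e)) =
            B ^+ l * L ^+ (k + m) * A ^+ l * A ^+ e by rewrite exprD !mulrA.
  by rewrite !scalerAl -(scalerAl _ (B ^+ l)) -cLB -(mulrA (L ^+ (k + m))) hQ evM evXn.
have -> : q ^+ (l * (k + m)) *: comm (L ^+ m * A ^+ (e + l)) (B ^+ l * L ^+ k) =
   ev ((q ^+ (l * (k + m)) * q ^+ (e * k)) *: ('X^m * tw (q ^+ e) (tw (q ^+ l) Q) * 'X^k)
        - 'X^(k + m) * Q) * A ^+ e.
  by rewrite /comm scalerBr h2 h1 scalerA evB evZ mulrBl -scalerAl.
apply: zA => // i i0 hi he'.
rewrite !(coefB, coefZ, coefMXn, coefXnM, coef_tw).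
case: (ltnP i (k + m)) => hik.
  rewrite subr0; case: ifP => hk; first by rewrite mulr0.
  have -> : (i - k < m)%N by lia.
  by rewrite mulr0.
have [j ej] : exists j, i = (k + m + j)%N by exists (i - (k + m))%N; rewrite subnKC.
rewrite ej in hi *.
have -> : (k + m + j < k)%N = false by lia.
have -> : (k + m + j - k < m)%N = false by lia.
have -> : (k + m + j - k - m = j)%N by lia.
have -> : (k + m + j - (k + m) = j)%N by lia.
rewrite -!exprM !mulrA -!exprD qdiv ?mul1r ?subrr //.
have -> : (l * (k + m) + e * k + e * j + l * j = l * (k + m + j) + e * (k + j))%N by ring.
by apply: dvdn_add; [exact: dvdn_mull | exact: dvdn_mulr].
Qed.

Lemma case4b m k n e : (0 < n)%N -> (0 < e)%N ->
  zero_at_special A B p (comm (L ^+ m * A ^+ n) (B ^+ (n + e) * L ^+ k)).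
Proof.
move=> hn he; have [Q [hP hQ]] := PQ n.
apply: (zscale (q ^+ (n * (k + m)))); first by rewrite expf_neq0 // q0.
have h1 : L ^+ m * A ^+ n * (B ^+ (n + e) * L ^+ k) =
   B ^+ e * ev (tw (q ^+ e) ('X^m * tw (q ^+ n) Q) * 'X^k).
  rewrite exprD.
  have -> : L ^+ m * A ^+ n * (B ^+ n * B ^+ e * L ^+ k) =
            L ^+ m * (A ^+ n * B ^+ n) * B ^+ e * L ^+ k by rewrite !mulrA.
  rewrite hP -(evXn m) -evM (pushn_r _ _ hLB) -(evXn k) -mulrA -evM.
  by [].
have h2 : q ^+ (n * (k + m)) *: (B ^+ (n + e) * L ^+ k * (L ^+ m * A ^+ n)) =
   B ^+ e * ev (Q * 'X^(k + m)).
  rewrite (addnC n e) exprD.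
  have -> : B ^+ e * B ^+ n * L ^+ k * (L ^+ m * A ^+ n) =
            B ^+ e * B ^+ n * (L ^+ (k + m) * A ^+ n) by rewrite exprD !mulrA.
  rewrite scalerAr -cAL mulrA -(mulrA (B ^+ e)) hQ -(evXn (k + m)) -mulrA -evM.
  by [].
have -> : q ^+ (n * (k + m)) *: comm (L ^+ m * A ^+ n) (B ^+ (n + e) * L ^+ k) =
   B ^+ e * ev (q ^+ (n * (k + m)) *: (tw (q ^+ e) ('X^m * tw (q ^+ n) Q) * 'X^k)
        - Q * 'X^(k + m)).
  by rewrite /comm scalerBr h2 h1 evB evZ mulrBr -scalerAr.
apply: zB => // i i0 hi he'.
rewrite !(coefB, coefZ, coefMXn, coefXnM, coef_tw).
case: (ltnP i (k + m)) => hik.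
  rewrite subr0; case: ifP => hk; first by rewrite !mulr0.
  have -> : (i - k < m)%N by lia.
  by rewrite !mulr0.
have [j ej] : exists j, i = (k + m + j)%N by exists (i - (k + m))%N; rewrite subnKC.
rewrite ej in hi *.
have -> : (k + m + j < k)%N = false by lia.
have -> : (k + m + j - k < m)%N = false by lia.
have -> : (k + m + j - k - m = j)%N by lia.
have -> : (k + m + j - k = m + j)%N by lia.
have -> : (k + m + j - (k + m) = j)%N by lia.
rewrite -!exprM !mulrA -!exprD qdiv ?mul1r ?subrr //.
have -> : (n * (k + m) + e * (m + j) + n * j = n * (k + m + j) + e * (m + j))%N by ring.
by apply: dvdn_add; [exact: dvdn_mull | exact: dvdn_mulr].
Qed.

End S.


Theorem lemma1 (F : fieldType) (q : F) (p : nat)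
  (hq1 : q != 1) (hp : (0 < p)%N) (hqp : q ^+ p = 1)
  (hmin : forall j : nat, (0 < j < p)%N -> q ^+ j != 1)
  (H : algType F) (A B : H)
  (hrel : A * B - q *: (B * A) = 1)
  (hbasis : is_std_basis A B) :
  forall (m k n l : nat), (0 < n)%N -> (0 < l)%N ->
    let L := Lam A B in
    [/\ zero_at_special A B p (comm (L ^+ m) (L ^+ k * A ^+ l)),
        zero_at_special A B p (comm (L ^+ m) (B ^+ l * L ^+ k)),
        zero_at_special A B p (comm (L ^+ m * A ^+ n) (L ^+ k * A ^+ l)),
        (n != l -> zero_at_special A B p (comm (L ^+ m * A ^+ n) (B ^+ l * L ^+ k)))
      & zero_at_special A B p (comm (B ^+ n * L ^+ m) (B ^+ l * L ^+ k))].
Proof.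
move=> m k n l hn hl L.
have hind := hbasis.1.
split.
- exact: (case1 _ _ _ _ _ _ hrel hind hqp).
- exact: (case2 _ _ _ _ _ _ hrel hind hqp).
- exact: (case3 _ _ _ _ _ _ hrel hind hqp).
- move=> nl; case: (ltngtP l n) => h.
  + rewrite -(subnK (ltnW h)); apply: (case4a _ _ _ _ _ _ hrel hind hp hqp hq1).
    by rewrite subn_gt0.
  + rewrite -(subnKC (ltnW h)); apply: (case4b _ _ _ _ _ _ hrel hind hp hqp hq1) => //.
    by rewrite subn_gt0.
  + by rewrite h eqxx in nl.
- exact: (case5 _ _ _ _ _ _ hrel hind hqp).
Qed.
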